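(* Let $\Bbbk$ be a field, $n\ge2$, and $R=\Bbbk[x]/\langle x^n\rangle$. The following cones in $\mathbb V$ are equal: (1) ${\operatorname{B_{\mathbb Q}}}(R)$; (2) $D=\operatorname{pos}\{\pi_d: d \text{ an } R\text{-degree sequence}\}$; (3) the cone $F$ defined as the intersection of: $\{\epsilon_{i,j}\ge0\}$ for $i\in\{0,1,2\}$, $j\in\mathbb Z$; $\{\alpha_{0,k}\ge0\}$ for $k\in\mathbb Z$; $\{\theta_k\ge0\}$ for $k\in\mathbb Z$; $\{\eta_k\ge0\}$ for $k\in\mathbb Z$; $\{\alpha_{i,k}=0\}$ for all $i\ge1$, $k\in\mathbb Z$; and $\{\eta_\infty=0\}$.
   Context: $\mathbb V$: the $\mathbb Q$-vector space of column-finite rational matrices $v=(v_{i,j})$, $i\in\mathbb N$, $j\in\mathbb Z$. For a finitely generated graded $R$-module $M$, $\beta^R(M)\in\mathbb V$ has entries $\beta^R_{i,j}(M)=\dim_\Bbbk\operatorname{Tor}_i^R(M,\Bbbk)_j$; ${\operatorname{B_{\mathbb Q}}}(R)$ is the set of finite $\mathbb Q_{\ge0}$-combinations of Betti diagrams of finitely generated graded $R$-modules; $\operatorname{pos}$ denotes finite $\mathbb Q_{\ge0}$-combinations. An $R$-degree sequence is either $(d_0,\infty,\infty,\ldots)$ with $d_0\in\mathbb Z$, or an integer sequence $(d_0,d_1,d_2,\ldots)$ with $d_0<d_1<d_0+n$ and $d_{i+2}-d_i=n$ for all $i\ge0$. For such $d$, $(\pi_d)_{i,j}=1$ if $j=d_i\ne\infty$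 and $0$ otherwise. Functionals on $v\in\mathbb V$: $\epsilon_{i,j}(v)=v_{i,j}$; $\alpha_{i,k}(v)=\epsilon_{i,k}(v)-\epsilon_{i+2,k+n}(v)$; $\theta_k(v)=\sum_{j\le k}\epsilon_{2,j}(v)-\sum_{j\le k-n+1}\epsilon_{1,j}(v)$; $\eta_k(v)=\sum_{j\le k}(\epsilon_{1,j}(v)-\epsilon_{2,j+1}(v))$; $\eta_\infty(v)=\sum_{j\in\mathbb Z}(\epsilon_{1,j}(v)-\epsilon_{2,j+1}(v))$ (all sums finite by column-finiteness). *)

(* Defs.v *)
From HB Require Import structures.
From mathcomp Require Import all_boot all_order all_algebra.
From Stdlib Require List.
Set Implicit Arguments. Unset Strict Implicit. Unset Printing Implicit Defensive.
Import Order.TTheory GRing.Theory Num.Theory.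
Local Open Scope ring_scope.

(* A finitely generated graded R-module is a finite-dimensional graded    *)
(* K-vector space M = (+)_j M_j together with x : M_j -> M_(j+1) with     *)
(* x^n = 0.  M_j is modelled as K^(gdim j) (row vectors), x on M_j as a   *)
(* matrix gx j (acting on the right: v |-> v *m gx j).                    *)

Definition isucc (z : int) : int := z + 1.

Fixpoint xpow (K : fieldType) (m : int -> nat)
    (X : forall j : int, 'M[K]_(m j, m (j + 1))) (r : nat) (j : int)
    : 'M[K]_(m j, m (iter r isucc j)) :=
  match r return 'M[K]_(m j, m (iter r isucc j)) with
  | 0 => 1%:M
  | r'.+1 => xpow X r' j *m X (iter r' isucc j)
  end.

Record gmod (K : fieldType) (n : nat) := GMod {
  gdim : int -> nat;
  gx : forall j : int, 'M[K]_(gdim j, gdim (j + 1));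
  gfin : exists a b : int, forall j : int, (j < a) || (b < j) -> gdim j = 0%N;
  gnil : forall j : int, xpow gx n j = 0
}.

(* Tor_i^R(M,K)_j, computed as the homology of M (x) F where F is the     *)
(* (minimal graded free) resolution of K = R/(x):                          *)
(*   0 <- R <-x- R(-1) <-x^(n-1)- R(-n) <-x- R(-n-1) <-x^(n-1)- ...        *)
(* F_i = R(-sh i), with differential F_i -> F_(i-1) multiplication by      *)
(* x^(pw i).  Hence (M (x) F_i)_j = M_(j - sh i), and the differential     *)
(* out of it in degree j is x^(pw i) : M_(j - sh i) -> M_(j - sh (i-1)).   *)
Definition sh (n i : nat) : int := ((i./2 * n) + odd i)%N%:Z.
Definition pw (n i : nat) : nat := if odd i then 1%N else n.-1.

(* dim Tor_i = dim ker d_i - dim im d_(i+1)  (d_0 = 0) *)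
Definition betti (K : fieldType) (n : nat) (M : gmod K n) (i : nat) (j : int)
    : nat :=
  (gdim M (j - sh n i)
   - (if i == 0%N then 0%N else \rank (xpow (@gx K n M) (pw n i) (j - sh n i)))
   - \rank (xpow (@gx K n M) (pw n i.+1) (j - sh n i.+1)))%N.

Definition inV (v : nat -> int -> rat) : Prop :=
  forall i : nat, exists a b : int, forall j : int, (j < a) || (b < j) -> v i j = 0.

Definition bettiQ (K : fieldType) (n : nat) (M : gmod K n) : nat -> int -> rat :=
  fun i j => (betti M i j)%:R.

Definition BQ (K : fieldType) (n : nat) (v : nat -> int -> rat) : Prop :=
  exists s : seq (rat * gmod K n),
    (forall p, List.In p s -> 0 <= p.1) /\
    forall i j, v i j = \sum_(p <- s) p.1 * bettiQ p.2 i j.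

(* R-degree sequences; None stands for infinity *)
Definition is_degseq (n : nat) (d : nat -> option int) : Prop :=
  (exists d0 : int, d 0%N = Some d0 /\ forall i, (0 < i)%N -> d i = None) \/
  (exists e : nat -> int, (forall i, d i = Some (e i)) /\
     e 0%N < e 1%N /\ e 1%N < e 0%N + n%:Z /\
     forall i, e i.+2 - e i = n%:Z).

Definition pi_d (d : nat -> option int) : nat -> int -> rat :=
  fun i j => if d i == Some j then 1 else 0.

Definition Dcone (n : nat) (v : nat -> int -> rat) : Prop :=
  exists s : seq (rat * (nat -> option int)),
    (forall p, List.In p s -> 0 <= p.1 /\ is_degseq n p.2) /\
    forall i j, v i j = \sum_(p <- s) p.1 * pi_d p.2 i j.

Definition isum (g : int -> rat) (L k : int) : rat :=
  if L <= k then \sum_(t < (absz (k - L)).+1) g (L + t%:Z) else 0.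

Definition vanish_below (g : int -> rat) (L : int) : Prop :=
  forall j, j < L -> g j = 0.
Definition vanish_above (g : int -> rat) (U : int) : Prop :=
  forall j, U < j -> g j = 0.

(* A finite-support sum  sum_{j <= k} g j  is isum g L k for ANY L below  *)
(* the support; conditions on such sums are stated for all such L.        *)
Definition eta_row (v : nat -> int -> rat) (j : int) : rat := v 1%N j - v 2%N (j + 1).

Definition Fcone (n : nat) (v : nat -> int -> rat) : Prop :=
  (* eps_{i,j} >= 0, i in {0,1,2} *)
  (forall (i : nat) (j : int), (i <= 2)%N -> 0 <= v i j) /\
  (* alpha_{0,k} >= 0 *)
  (forall k : int, 0 <= v 0%N k - v 2%N (k + n%:Z)) /\
  (* theta_k >= 0 *)
  (forall (k L1 L2 : int), vanish_below (v 2%N) L1 -> vanish_below (v 1%N) L2 ->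
     0 <= isum (v 2%N) L1 k - isum (v 1%N) L2 (k - n%:Z + 1)) /\
  (* eta_k >= 0 *)
  (forall (k L : int), vanish_below (eta_row v) L -> 0 <= isum (eta_row v) L k) /\
  (* alpha_{i,k} = 0 for i >= 1 *)
  (forall (i : nat) (k : int), (1 <= i)%N -> v i k = v i.+2 (k + n%:Z)) /\
  (* eta_infinity = 0 *)
  (forall L U : int, vanish_below (eta_row v) L -> vanish_above (eta_row v) U ->
     isum (eta_row v) L U = 0).

(* Main.v *)
Require Import Defs.
From HB Require Import structures.
From mathcomp Require Import all_boot all_order all_algebra.
From mathcomp Require Import zify ring lra.
From Stdlib Require Import FunctionalExtensionality.
Import Order.TTheory GRing.Theory Num.Theory.
Local Open Scope ring_scope.
Set Implicit Arguments. Unset Strict Implicit. Unset Printing Implicit Defensive.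

Lemma int_up (P : int -> Prop) (a : int) :
  P a -> (forall k, a <= k -> P k -> P (k + 1)) -> forall k, a <= k -> P k.
Proof.
move=> Pa IH k ak.
have -> : k = a + (absz (k - a)%R)%:Z by lia.
elim: (absz _) => [|m IHm]; first by rewrite addr0.
have -> : a + (m.+1)%:Z = (a + m%:Z) + 1 by lia.
by apply: IH => //; lia.
Qed.

Lemma int_all (P : int -> Prop) (a : int) :
  (forall k, k <= a -> P k) -> (forall k, a <= k -> P k -> P (k + 1)) -> forall k, P k.
Proof.
move=> H1 H2 k; case: (leP k a) => h; first exact: H1.
apply: (@int_up _ a) => //; [exact: H1 | lia].
Qed.

Lemma isum_lt (g : int -> rat) L k : k < L -> isum g L k = 0.
Proof. by move=> h; rewrite /isum ifF //; apply/negbTE; rewrite -ltNge. Qed.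

Lemma isum_S (g : int -> rat) L k :
  isum g L (k + 1) = isum g L k + (if L <= k + 1 then g (k + 1) else 0).
Proof.
case: (leP L k) => h.
  rewrite /isum ifT; last by lia.
  rewrite ifT // ifT; last by lia.
  have -> : absz (k + 1 - L)%R = (absz (k - L)%R).+1 by lia.
  rewrite big_ord_recr /=; congr (_ + g _); lia.
case: (leP L (k + 1)) => h2.
  have -> : L = k + 1 by lia.
  rewrite [isum g _ k]isum_lt; last by lia.
  rewrite /isum ifT // subrr /= big_ord_recr big_ord0 /= add0r addr0 add0r; done.
by rewrite !isum_lt ?addr0 //; lia.
Qed.

Lemma isum_ext (f g : int -> rat) L k :
  (forall j, L <= j -> j <= k -> f j = g j) -> isum f L k = isum g L k.
Proof.
move=> h; rewrite /isum; case: ifP => // hk; apply: eq_bigr => t _.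
have := ltn_ord t; move=> ht; apply: h; lia.
Qed.

Lemma isum0 L k : isum (fun _ => 0) L k = 0.
Proof. by rewrite /isum; case: ifP => // _; rewrite big1. Qed.

Lemma isum_add (f g : int -> rat) L k :
  isum (fun j => f j + g j) L k = isum f L k + isum g L k.
Proof. by rewrite /isum; case: ifP => _; rewrite ?addr0 // big_split. Qed.

Lemma isum_scale (c : rat) (f : int -> rat) L k :
  isum (fun j => c * f j) L k = c * isum f L k.
Proof. by rewrite /isum; case: ifP => _; rewrite ?mulr0 // mulr_sumr. Qed.

Lemma isum_opp (f : int -> rat) L k :
  isum (fun j => - f j) L k = - isum f L k.
Proof. by rewrite /isum; case: ifP => _; rewrite ?oppr0 // sumrN. Qed.

Lemma isum_sub (f g : int -> rat) L k :
  isum (fun j => f j - g j) L k = isum f L k - isum g L k.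
Proof. by rewrite isum_add isum_opp. Qed.

Lemma isum_le (f g : int -> rat) L k :
  (forall j, f j <= g j) -> isum f L k <= isum g L k.
Proof. by move=> h; rewrite /isum; case: ifP => // _; apply: ler_sum => t _. Qed.

Lemma isum_ge0 (f : int -> rat) L k : (forall j, 0 <= f j) -> 0 <= isum f L k.
Proof. by move=> h; rewrite -(isum0 L k); apply: isum_le. Qed.

Lemma isum_zero (f : int -> rat) L k : (forall j, j <= k -> f j = 0) -> isum f L k = 0.
Proof. by move=> h; rewrite -(isum0 L k); apply: isum_ext => j _ hj; apply: h. Qed.

Lemma isum_lower (g : int -> rat) L L' k :
  vanish_below g L -> L' <= L -> isum g L' k = isum g L k.
Proof.
move=> hv hL; case: (leP L k) => hk.
  move: k hk; apply: (@int_up _ L).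
    rewrite -{1}(subrK 1 L) isum_S ifT; last by lia.
    rewrite (@isum_zero _ _ (L - 1)); last by move=> j hj; apply: hv; lia.
    by rewrite add0r subrK /isum subrr ifT //= big_ord_recr big_ord0 /= add0r addr0.
  move=> k hLk IH; rewrite !isum_S IH ifT; last by lia.
  by rewrite ifT //; lia.
rewrite [RHS]isum_lt // isum_zero // => j hj; apply: hv; lia.
Qed.

Lemma isum_upper (g : int -> rat) L U k :
  vanish_above g U -> U <= k -> isum g L k = isum g L U.
Proof.
move=> hv; move: k; apply: (@int_up _ U) => // k hk IH.
rewrite isum_S IH (hv (k + 1)); last by lia.
by case: ifP; rewrite addr0.
Qed.

Lemma isum_shift (g : int -> rat) c L k :
  isum (fun j => g (j + c)) L k = isum g (L + c) (k + c).
Proof.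
rewrite /isum lerD2r; case: ifP => // _.
have -> : k + c - (L + c) = k - L by lia.
by apply: eq_bigr => t _; rewrite addrAC.
Qed.

Lemma isum_delta (c : rat) (d : int) L k :
  isum (fun j => if j == d then c else 0) L k =
  if (L <= d) && (d <= k) then c else 0.
Proof.
move: k; apply: (@int_all _ (L - 1)).
  move=> k hk; rewrite isum_lt; last by lia.
  by case: ifP => //; lia.
move=> k _ IH; rewrite isum_S IH /=.
have [h|h] := eqVneq (k + 1) d.
  have hdk : (d <= k) = false by lia.
  by rewrite h hdk andbF add0r lexx andbT.
move/eqP: h => h.
have -> : (d <= k + 1) = (d <= k) by apply/idP/idP; lia.
by rewrite if_same addr0.
Qed.

Lemma isum_point (g : int -> rat) L k d :
  (forall j, 0 <= g j) -> L <= d -> d <= k -> g d <= isum g L k.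
Proof.
move=> hg h1 h2.
have := isum_delta (g d) d L k; rewrite h1 h2 /= => <-.
apply: isum_le => j; case: eqP => [->|_] //.
Qed.

Lemma iter_isucc r (j : int) : iter r isucc j = j + r%:Z.
Proof. elim: r => [|r IH] /=; first by rewrite addr0. by rewrite IH /isucc; lia. Qed.

Lemma gdim_bound (K : fieldType) (n : nat) (M : gmod K n) :
  exists N : nat, forall j, (gdim M j <= N)%N.
Proof.
have [a [b hab]] := gfin M.
exists (\max_(t < (absz (b - a)%R).+1) gdim M (a + t%:Z)) => j.
case: (leP a j) => h1; last by rewrite hab //; apply/orP; left.
case: (leP j b) => h2; last by rewrite hab //; apply/orP; right.
have ht : (absz (j - a)%R < (absz (b - a)%R).+1)%N by lia.
have := @leq_bigmax _ (fun t : 'I_(absz (b - a)%R).+1 => gdim M (a + t%:Z)) (Ordinal ht).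
by rewrite /= (_ : a + (absz (j - a)%R)%:Z = j) //; lia.
Qed.

Definition Pm (K : fieldType) (n : nat) (M : gmod K n) (N : nat) (j : int)
  : 'M[K]_(gdim M j, N) := pid_mx (gdim M j).

Definition Ym (K : fieldType) (n : nat) (M : gmod K n) (N : nat) (j : int) : 'M[K]_N :=
  (Pm M N j)^T *m gx M j *m Pm M N (j + 1).

Fixpoint Zm (K : fieldType) (n : nat) (M : gmod K n) (N : nat) (r : nat) (j : int)
  : 'M[K]_N :=
  match r with
  | 0 => (Pm M N j)^T *m Pm M N j
  | r'.+1 => Zm M N r' j *m Ym M N (j + r'%:Z)
  end.

Lemma PPt (K : fieldType) (n : nat) (M : gmod K n) (N : nat) j :
  (gdim M j <= N)%N -> Pm M N j *m (Pm M N j)^T = 1%:M.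
Proof.
move=> h; rewrite /Pm tr_pid_mx mul_pid_mx.
rewrite (minn_idPr (leqnn _)) (minn_idPr h); exact: pid_mx_1.
Qed.

Lemma rankP (K : fieldType) (n : nat) (M : gmod K n) (N : nat) j :
  (gdim M j <= N)%N -> \rank (Pm M N j) = gdim M j.
Proof. by move=> h; rewrite /Pm rank_pid_mx. Qed.

Lemma freeP (K : fieldType) (n : nat) (M : gmod K n) (N : nat) j :
  (gdim M j <= N)%N -> row_free (Pm M N j).
Proof. by move=> h; rewrite /row_free rankP. Qed.

Lemma rank_sandwich (K : fieldType) (n : nat) (M : gmod K n) (N : nat) j i
  (A : 'M[K]_(gdim M j, gdim M i)) :
  (forall j, (gdim M j <= N)%N) ->
  \rank ((Pm M N j)^T *m A *m Pm M N i) = \rank A.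
Proof.
move=> hN; rewrite mxrankMfree ?freeP //.
by rewrite -mxrank_tr trmx_mul trmxK mxrankMfree ?freeP // mxrank_tr.
Qed.

Lemma ZE (K : fieldType) (n : nat) (M : gmod K n) (N : nat) r j :
  (forall j, (gdim M j <= N)%N) ->
  Zm M N r j = (Pm M N j)^T *m xpow (@gx K n M) r j *m Pm M N (iter r isucc j).
Proof.
move=> hN; elim: r => [|r IH] /=; first by rewrite mulmx1.
rewrite IH /Ym -iter_isucc.
rewrite !mulmxA -[_ *m Pm M N _ *m (Pm M N _)^T]mulmxA PPt // mulmx1.
by [].
Qed.

Lemma rankZ (K : fieldType) (n : nat) (M : gmod K n) (N : nat) r j :
  (forall j, (gdim M j <= N)%N) ->
  \rank (Zm M N r j) = \rank (xpow (@gx K n M) r j).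
Proof. by move=> hN; rewrite ZE // rank_sandwich. Qed.

Lemma rankZ0 (K : fieldType) (n : nat) (M : gmod K n) (N : nat) j :
  (forall j, (gdim M j <= N)%N) -> \rank (Zm M N 0 j) = gdim M j.
Proof. by move=> hN; rewrite rankZ //= mxrank1. Qed.

Lemma Z_E (K : fieldType) (n : nat) (M : gmod K n) (N : nat) r j :
  (forall j, (gdim M j <= N)%N) ->
  Zm M N r j *m (Zm M N 0 (j + r%:Z)) = Zm M N r j.
Proof.
move=> hN; rewrite !ZE // -iter_isucc /= mulmx1.
by rewrite !mulmxA -[_ *m Pm M N _ *m (Pm M N _)^T]mulmxA PPt // mulmx1.
Qed.

Lemma E_Z (K : fieldType) (n : nat) (M : gmod K n) (N : nat) r j :
  (forall j, (gdim M j <= N)%N) ->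
  Zm M N 0 j *m Zm M N r j = Zm M N r j.
Proof.
move=> hN; rewrite !ZE //= mulmx1.
by rewrite !mulmxA -[_ *m Pm M N _ *m (Pm M N _)^T]mulmxA PPt // mulmx1.
Qed.

Lemma ZD (K : fieldType) (n : nat) (M : gmod K n) (N : nat) r s j :
  (forall j, (gdim M j <= N)%N) ->
  Zm M N (r + s) j = Zm M N r j *m Zm M N s (j + r%:Z).
Proof.
move=> hN; elim: s => [|s IH]; first by rewrite addn0 Z_E.
rewrite addnS /= IH -mulmxA; congr (_ *m (_ *m Ym M N _)).
by rewrite PoszD addrA.
Qed.

Lemma Zn (K : fieldType) (n : nat) (M : gmod K n) (N : nat) r j :
  (forall j, (gdim M j <= N)%N) -> (n <= r)%N -> Zm M N r j = 0.
Proof.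
move=> hN hr; rewrite -(subnKC hr) ZD // ZE // gnil.
by rewrite mulmx0 !mul0mx.
Qed.

Lemma Frob (K : fieldType) (n : nat) (M : gmod K n) (N : nat) u v w j :
  (forall j, (gdim M j <= N)%N) ->
  (\rank (Zm M N (u + v) j) + \rank (Zm M N (v + w) (j + u%:Z))
   <= \rank (Zm M N v (j + u%:Z)) + \rank (Zm M N (u + v + w) j))%N.
Proof.
move=> hN.
have := mxrank_Frobenius (Zm M N u j) (Zm M N v (j + u%:Z)) (Zm M N w (j + u%:Z + v%:Z)).
by rewrite -!ZD // -addrA -PoszD -ZD // -ZD.
Qed.

Lemma sh0 n : sh n 0 = 0. Proof. by rewrite /sh /= mul0n. Qed.
Lemma sh1 n : sh n 1 = 1. Proof. by rewrite /sh /= mul0n. Qed.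
Lemma sh2 n : sh n 2 = n%:Z. Proof. by rewrite /sh /= mul1n addn0. Qed.
Lemma sh3 n : sh n 3 = n%:Z + 1. Proof. by rewrite /sh /= mul1n. Qed.
Lemma shSS n i : sh n i.+2 = sh n i + n%:Z.
Proof. by rewrite /sh /= -!PoszD; congr Posz; rewrite mulSn; lia. Qed.
Lemma pwSS n i : pw n i.+2 = pw n i. Proof. by rewrite /pw /= negbK. Qed.

Lemma natrB2 (a b c : nat) : (b + c <= a)%N ->
  ((a - b - c)%N%:R : rat) = a%:R - b%:R - c%:R.
Proof. by move=> h; rewrite natrB ?natrB //; lia. Qed.

Lemma betti_shift (K : fieldType) (n : nat) (M : gmod K n) i k :
  (1 <= i)%N -> betti M i.+2 (k + n%:Z) = betti M i k.
Proof.
move=> hi; rewrite /betti !shSS !pwSS.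
have -> : k + n%:Z - (sh n i + n%:Z) = k - sh n i by lia.
have -> : k + n%:Z - (sh n i.+1 + n%:Z) = k - sh n i.+1 by lia.
by rewrite ifF ?ifF //; lia.
Qed.

Definition Dq (K : fieldType) (n : nat) (M : gmod K n) (j : int) : rat := (gdim M j)%:R.
Definition Aq (K : fieldType) (n : nat) (M : gmod K n) N (j : int) : rat :=
  (\rank (Zm M N 1 j))%:R.
Definition Bq (K : fieldType) (n : nat) (M : gmod K n) N (j : int) : rat :=
  (\rank (Zm M N n.-1 j))%:R.

Lemma Frob0 (K : fieldType) (n : nat) (M : gmod K n) (N : nat) u w j :
  (forall j, (gdim M j <= N)%N) -> (n <= u + w)%N ->
  (\rank (Zm M N u j) + \rank (Zm M N w (j + u%:Z)) <= gdim M (j + u%:Z))%N.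
Proof.
move=> hN huw; have := @Frob K n M N u 0 w j hN.
by rewrite addn0 add0n rankZ0 // (@Zn K n M N (u + w) j hN huw) mxrank0 addn0.
Qed.

Lemma predn_int n : (1 <= n)%N -> (n.-1)%:Z = n%:Z - 1.
Proof. by move=> h; lia. Qed.

Lemma pw1 n : pw n 1 = 1%N. Proof. by []. Qed.
Lemma pw2 n : pw n 2 = n.-1. Proof. by []. Qed.
Lemma pw3 n : pw n 3 = 1%N. Proof. by []. Qed.

Lemma bettiQ0 (K : fieldType) (n : nat) (M : gmod K n) N j :
  (forall j, (gdim M j <= N)%N) -> (2 <= n)%N ->
  bettiQ M 0 j = Dq M j - Aq M N (j - 1).
Proof.
move=> hN hn; rewrite /bettiQ /betti -!(rankZ _ _ hN) sh0 sh1 pw1 subr0 eqxx subn0.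
rewrite natrB //; have := @Frob0 K n M N 1 n.-1 (j - 1) hN.
rewrite (_ : j - 1 + 1 = j); last by lia.
move=> h; have e : (1 + n.-1 = n)%N by rewrite add1n prednK // ltnW.
have := h ltac:(by rewrite e); move=> h2; apply: leq_trans h2; apply: leq_addr.
Qed.

Lemma bettiQ1 (K : fieldType) (n : nat) (M : gmod K n) N j :
  (forall j, (gdim M j <= N)%N) -> (2 <= n)%N ->
  bettiQ M 1 j = Dq M (j - 1) - Aq M N (j - 1) - Bq M N (j - n%:Z).
Proof.
move=> hN hn; rewrite /bettiQ /betti -!(rankZ _ _ hN) sh1 sh2 pw1 pw2.
rewrite (_ : (1 == 0)%N = false) // natrB2 //.
have := @Frob0 K n M N n.-1 1 (j - n%:Z) hN.
rewrite (_ : j - n%:Z + (n.-1)%:Z = j - 1); last by lia.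
rewrite addn1 prednK; last by apply: ltnW.
by rewrite addnC => h; apply: h.
Qed.

Lemma bettiQ2 (K : fieldType) (n : nat) (M : gmod K n) N j :
  (forall j, (gdim M j <= N)%N) -> (2 <= n)%N ->
  bettiQ M 2 j = Dq M (j - n%:Z) - Bq M N (j - n%:Z) - Aq M N (j - n%:Z - 1).
Proof.
move=> hN hn; rewrite /bettiQ /betti -!(rankZ _ _ hN) sh2 sh3 pw2 pw3.
rewrite (_ : (2 == 0)%N = false) //.
rewrite (_ : j - (n%:Z + 1) = j - n%:Z - 1); last by lia.
rewrite natrB2 //; have := @Frob0 K n M N 1 n.-1 (j - n%:Z - 1) hN.
rewrite (_ : j - n%:Z - 1 + 1 = j - n%:Z); last by lia.
rewrite add1n prednK; last by apply: ltnW.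
by rewrite addnC => h; apply: h.
Qed.

Lemma isum_Sv (g : int -> rat) L k :
  vanish_below g L -> isum g L (k + 1) = isum g L k + g (k + 1).
Proof.
move=> hv; rewrite isum_S; case: ifP => // h.
by rewrite hv ?addr0 //; rewrite ltNge h.
Qed.


Lemma rankZ_row (K : fieldType) (n : nat) (M : gmod K n) N r j :
  (forall j, (gdim M j <= N)%N) -> (\rank (Zm M N r j) <= gdim M j)%N.
Proof. by move=> hN; rewrite rankZ // rank_leq_row. Qed.

Lemma chain (K : fieldType) (n : nat) (M : gmod K n) N r j :
  (forall j, (gdim M j <= N)%N) ->
  Dq M j <= (\rank (Zm M N r j))%:R +
    \sum_(0 <= t < r) (Dq M (j + t%:Z) - Aq M N (j + t%:Z)).
Proof.
move=> hN; elim: r => [|r IH].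
  by rewrite big_geq // addr0 rankZ0.
have -> : \sum_(0 <= t < r.+1) (Dq M (j + t%:Z) - Aq M N (j + t%:Z)) =
  \sum_(0 <= t < r) (Dq M (j + t%:Z) - Aq M N (j + t%:Z)) +
  (Dq M (j + r%:Z) - Aq M N (j + r%:Z)) by rewrite big_nat_recr.
apply: (le_trans IH).
have := @Frob K n M N r 0 1 j hN.
rewrite addn0 add0n rankZ0 // => h.
have : ((\rank (Zm M N r j))%:R + (\rank (Zm M N 1 (j + r%:Z)))%:R
        <= (gdim M (j + r%:Z))%:R + (\rank (Zm M N r.+1 j))%:R :> rat).
  by move: h; rewrite addn1 -!natrD ler_nat.
rewrite /Dq /Aq => h2; lra.
Qed.

Lemma tele (K : fieldType) (n : nat) (M : gmod K n) N r p :
  (forall j, (gdim M j <= N)%N) -> (1 <= n)%N -> (r <= n.-1)%N ->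
  \sum_(0 <= c < r) Bq M N (p - c%:Z) <= Aq M N p - (\rank (Zm M N r.+1 (p - r%:Z)))%:R.
Proof.
case: n M => [|m] M hN // _; rewrite [m.+1.-1]/=.
elim: r => [|r IH] hr.
  by rewrite big_geq // subr0 /Aq subrr.
have -> : \sum_(0 <= c < r.+1) Bq M N (p - c%:Z) =
  \sum_(0 <= c < r) Bq M N (p - c%:Z) + Bq M N (p - r%:Z) by rewrite big_nat_recr.
have {IH} := IH (ltnW hr).
have := @Frob K m.+1 M N 1 r.+1 (m - r.+1) (p - r.+1%:Z) hN.
rewrite add1n (@Zn K m.+1 M N (r.+2 + (m - r.+1)) _ hN); last by lia.
rewrite mxrank0 addn0 (_ : (r.+1 + (m - r.+1))%N = m); last by lia.
rewrite (_ : p - r.+1%:Z + 1 = p - r%:Z); last by lia.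
move=> h1 h2.
have : ((\rank (Zm M N r.+2 (p - r.+1%:Z)))%:R + Bq M N (p - r%:Z)
        <= (\rank (Zm M N r.+1 (p - r%:Z)))%:R :> rat).
  by rewrite /Bq -natrD ler_nat; exact: h1.
lra.
Qed.
Lemma theta_closed (n : nat) (D A B v1 v2 : int -> rat) (a : int) :
  (2 <= n)%N ->
  (forall j, j < a -> D j = 0 /\ A j = 0 /\ B j = 0) ->
  (forall j, v1 j = D (j - 1) - A (j - 1) - B (j - n%:Z)) ->
  (forall j, v2 j = D (j - n%:Z) - B (j - n%:Z) - A (j - n%:Z - 1)) ->
  forall k, isum v2 a k - isum v1 a (k - n%:Z + 1) =
            A (k - n%:Z) - \sum_(0 <= c < n.-1) B (k - n%:Z - c%:Z).
Proof.
case: n => [|[|m]] // _ hz e1 e2.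
have v1b : vanish_below v1 a.
  by move=> j hj; rewrite e1; have [? [? ?]] := hz (j - 1) ltac:(lia);
     have [? [? ?]] := hz (j - m.+2%:Z) ltac:(lia); lra.
have v2b : vanish_below v2 a.
  by move=> j hj; have [? [? ?]] := hz (j - m.+2%:Z) ltac:(lia);
     have [? [? ?]] := hz (j - m.+2%:Z - 1) ltac:(lia); rewrite e2; lra.
apply: (@int_all _ (a - 1)).
  move=> k hk; rewrite !isum_lt; try lia.
  have [_ [-> _]] := hz (k - m.+2%:Z) ltac:(lia).
  rewrite big1_seq ?subrr // => c _; have [_ [_ ->]] := hz (k - m.+2%:Z - c%:Z) ltac:(lia).
  done.
move=> k _ IH.
rewrite isum_Sv // (_ : k + 1 - m.+2%:Z + 1 = (k - m.+2%:Z + 1) + 1); last by lia.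
rewrite isum_Sv //.
have -> : isum v2 a k + v2 (k + 1) - (isum v1 a (k - m.+2%:Z + 1) + v1 (k - m.+2%:Z + 1 + 1))
  = (isum v2 a k - isum v1 a (k - m.+2%:Z + 1)) + v2 (k + 1) - v1 (k - m.+2%:Z + 1 + 1) by ring.
rewrite IH e1 e2 /=.
have -> : \sum_(0 <= c < m.+1) B (k + 1 - m.+2%:Z - c%:Z) =
   B (k + 1 - m.+2%:Z) + \sum_(0 <= c < m) B (k - m.+2%:Z - c%:Z).
  rewrite big_nat_recl //; congr (B _ + _); first by lia.
  by apply: eq_bigr => c _; congr B; lia.
have -> : \sum_(0 <= c < m.+1) B (k - m.+2%:Z - c%:Z) =
   \sum_(0 <= c < m) B (k - m.+2%:Z - c%:Z) + B (k - m.+2%:Z - m%:Z).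
  by rewrite big_nat_recr.
rewrite (_ : k - m.+2%:Z + 1 + 1 - 1 = k + 1 - m.+2%:Z); last by lia.
rewrite (_ : k + 1 - m.+2%:Z - 1 = k - m.+2%:Z); last by lia.
rewrite (_ : k - m.+2%:Z + 1 + 1 - m.+2%:Z = k - m.+2%:Z - m%:Z); last by lia.
ring.
Qed.

Lemma eta_closed (n : nat) (D A B v1 v2 : int -> rat) (a : int) :
  (2 <= n)%N ->
  (forall j, j < a -> D j = 0 /\ A j = 0 /\ B j = 0) ->
  (forall j, v1 j = D (j - 1) - A (j - 1) - B (j - n%:Z)) ->
  (forall j, v2 j = D (j - n%:Z) - B (j - n%:Z) - A (j - n%:Z - 1)) ->
  forall k, isum v1 a k - isum v2 a (k + 1) =
     \sum_(0 <= t < n.-1) (D (k - n%:Z + 1 + t%:Z) - A (k - n%:Z + 1 + t%:Z))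
     - D (k - n%:Z + 1) + B (k - n%:Z + 1).
Proof.
case: n => [|[|m]] // _ hz e1 e2.
have v1b : vanish_below v1 a.
  by move=> j hj; rewrite e1; have [? [? ?]] := hz (j - 1) ltac:(lia);
     have [? [? ?]] := hz (j - m.+2%:Z) ltac:(lia); lra.
have v2b : vanish_below v2 a.
  by move=> j hj; have [? [? ?]] := hz (j - m.+2%:Z) ltac:(lia);
     have [? [? ?]] := hz (j - m.+2%:Z - 1) ltac:(lia); rewrite e2; lra.
apply: (@int_all _ (a - 1)).
  move=> k hk; rewrite isum_lt; last by lia.
  rewrite isum_zero; last first.
    move=> j hj; have [? [? ?]] := hz (j - m.+2%:Z) ltac:(lia);
     have [? [? ?]] := hz (j - m.+2%:Z - 1) ltac:(lia); rewrite e2; lra.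
  have [-> [_ ->]] := hz (k - m.+2%:Z + 1) ltac:(lia).
  rewrite big1_seq ?subrr //= => t; rewrite mem_iota => /andP [_ ht].
  have [-> [-> _]] := hz (k - m.+2%:Z + 1 + t%:Z) ltac:(lia).
  by rewrite subrr.
move=> k _ IH.
rewrite isum_Sv // (isum_Sv (k + 1)) //.
have -> : isum v1 a k + v1 (k + 1) - (isum v2 a (k + 1) + v2 (k + 1 + 1))
  = (isum v1 a k - isum v2 a (k + 1)) + v1 (k + 1) - v2 (k + 1 + 1) by ring.
rewrite IH e1 e2 /=.
set f := fun t : int => D t - A t.
have -> : \sum_(0 <= t < m.+1) (D (k - m.+2%:Z + 1 + t%:Z) - A (k - m.+2%:Z + 1 + t%:Z)) =
   f (k - m.+2%:Z + 1) + \sum_(0 <= t < m) f (k + 1 - m.+2%:Z + 1 + t%:Z).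
  rewrite big_nat_recl //; congr (_ + _); first by rewrite /f addr0.
  by apply: eq_bigr => t _; rewrite /f; congr (D _ - A _); lia.
have -> : \sum_(0 <= t < m.+1) (D (k + 1 - m.+2%:Z + 1 + t%:Z) - A (k + 1 - m.+2%:Z + 1 + t%:Z)) =
   \sum_(0 <= t < m) f (k + 1 - m.+2%:Z + 1 + t%:Z) + f k.
  rewrite big_nat_recr //; congr (_ + _); rewrite /f; congr (D _ - A _); lia.
rewrite /f.
rewrite (_ : k + 1 - 1 = k); last by lia.
rewrite (_ : k + 1 + 1 - m.+2%:Z - 1 = k - m.+2%:Z + 1); last by lia.
rewrite (_ : k + 1 - m.+2%:Z + 1 = k + 1 + 1 - m.+2%:Z); last by lia.
rewrite (_ : k + 1 - m.+2%:Z = k - m.+2%:Z + 1); last by lia.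
ring.
Qed.

Definition FA (n : nat) (L : int) (v : nat -> int -> rat) : Prop :=
  (forall i j, (i <= 2)%N -> j < L -> v i j = 0) /\
  (forall i j, (i <= 2)%N -> 0 <= v i j) /\
  (forall k, 0 <= v 0%N k - v 2%N (k + n%:Z)) /\
  (forall k, isum (v 1%N) L (k - n%:Z + 1) <= isum (v 2%N) L k) /\
  (forall k, isum (v 2%N) L (k + 1) <= isum (v 1%N) L k) /\
  (forall i k, (1 <= i)%N -> v i k = v i.+2 (k + n%:Z)) /\
  (exists U, forall k, U <= k -> isum (v 1%N) L k = isum (v 2%N) L (k + 1)).

Lemma module_FA (K : fieldType) (n : nat) (M : gmod K n) :
  (2 <= n)%N -> exists L, FA n L (bettiQ M).
Proof.
move=> hn.
have [N hN] := gdim_bound M.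
have [a [b hab]] := gfin M.
have hD : forall j, (j < a) || (b < j) -> Dq M j = 0.
  by move=> j hj; rewrite /Dq hab.
have hA : forall j, (j < a) || (b < j) -> Aq M N j = 0.
  move=> j hj; apply/eqP; rewrite /Aq pnatr_eq0 -leqn0.
  by rewrite -(hab j hj) rankZ_row.
have hB : forall j, (j < a) || (b < j) -> Bq M N j = 0.
  move=> j hj; apply/eqP; rewrite /Bq pnatr_eq0 -leqn0.
  by rewrite -(hab j hj) rankZ_row.
have e0 := fun j => @bettiQ0 K n M N j hN hn.
have e1 := fun j => @bettiQ1 K n M N j hN hn.
have e2 := fun j => @bettiQ2 K n M N j hN hn.
have hlo : forall j, j < a -> (j < a) || (b < j) by move=> j ->.
have v1b : vanish_below (bettiQ M 1) a.
  by move=> j hj; rewrite e1 hD ?hA ?hB ?subrr ?subr0 //; apply: hlo; lia.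
have v2b : vanish_below (bettiQ M 2) a.
  by move=> j hj; rewrite e2 hD ?hA ?hB ?subrr ?subr0 //; apply: hlo; lia.
have hz : forall j, j < a -> Dq M j = 0 /\ Aq M N j = 0 /\ Bq M N j = 0.
  by move=> j hj; rewrite hD ?hA ?hB //; apply: hlo.
exists a; split; [|split; [|split; [|split; [|split; [|split]]]]].
- move=> i j; case: i => [|[|[|i]]] // _ hj.
  + by rewrite e0 hD ?hA ?subrr //; apply: hlo; lia.
  + exact: v1b.
  + exact: v2b.
- by move=> i j _; rewrite /bettiQ ler0n.
- move=> k; rewrite e0 e2 (_ : k + n%:Z - n%:Z = k); last by lia.
  have -> : Dq M k - Aq M N (k - 1) - (Dq M k - Bq M N k - Aq M N (k - 1)) = Bq M N k by ring.
  by rewrite /Bq ler0n.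
- move=> k; rewrite -subr_ge0.
  rewrite (theta_closed hn hz e1 e2).
  rewrite subr_ge0; apply: (le_trans (@tele K n M N n.-1 (k - n%:Z) hN _ _)) => //.
    exact: ltnW.
  rewrite prednK; last by apply: ltnW.
  by rewrite (Zn _ hN) // mxrank0 subr0.
- move=> k; rewrite -subr_ge0.
  rewrite (eta_closed hn hz e1 e2).
  have := @chain K n M N n.-1 (k - n%:Z + 1) hN.
  rewrite -/(Bq M N _) => h; lra.
- by move=> i k hi; rewrite /bettiQ betti_shift.
- exists (b + n%:Z) => k hk; apply/eqP; rewrite -subr_eq0; apply/eqP.
  rewrite (eta_closed hn hz e1 e2).
  have hhi : forall j, b < j -> (j < a) || (b < j) by move=> j ->; rewrite orbT.
  rewrite hD ?hB; try (apply: hhi; lia).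
  rewrite big1_seq ?subrr //= => t; rewrite mem_iota => /andP [_ ht].
  by rewrite hD ?hA ?subrr //; apply: hhi; lia.
Qed.

Lemma isum_indep (g : int -> rat) L1 L2 k :
  vanish_below g L1 -> vanish_below g L2 -> isum g L1 k = isum g L2 k.
Proof.
move=> h1 h2; case: (leP L1 L2) => h.
  by rewrite (isum_lower _ h2 h).
by rewrite (@isum_lower _ L1 L2) //; apply: ltW.
Qed.

Lemma FA_lower n L L' v : FA n L v -> L' <= L -> FA n L' v.
Proof.
move=> [h0 [h1 [h2 [h3 [h4 [h5 [U h6]]]]]]] hL.
have vb : forall i, (i <= 2)%N -> vanish_below (v i) L by move=> i hi j hj; apply: h0.
have E1 := fun k => @isum_lower (v 1%N) L L' k (vb 1%N isT) hL.
have E2 := fun k => @isum_lower (v 2%N) L L' k (vb 2%N isT) hL.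
split; [|split; [|split; [|split; [|split; [|split]]]]] => //.
- move=> i j hi hj; apply: h0 => //; exact: lt_le_trans hj hL.
- by move=> k; rewrite !E1 !E2.
- by move=> k; rewrite !E1 !E2.
- by exists U => k hk; rewrite !E1 !E2; apply: h6.
Qed.

Lemma FA_comb n L v w (c : rat) : FA n L v -> FA n L w -> 0 <= c ->
  FA n L (fun i j => c * v i j + w i j).
Proof.
move=> [h0 [h1 [h2 [h3 [h4 [h5 [U h6]]]]]]] [g0 [g1 [g2 [g3 [g4 [g5 [U' g6]]]]]]] hc.
have E : forall i k, isum (fun j => c * v i j + w i j) L k = c * isum (v i) L k + isum (w i) L k.
  by move=> i k; rewrite isum_add isum_scale.
split; [|split; [|split; [|split; [|split; [|split]]]]].
- by move=> i j hi hj; rewrite h0 // g0 // mulr0 addr0.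
- move=> i j hi; apply: addr_ge0; last exact: g1.
  by apply: mulr_ge0 => //; exact: h1.
- move=> k; have := h2 k; have := g2 k.
  have : 0 <= c * (v 0%N k - v 2%N (k + n%:Z)) by apply: mulr_ge0 => //; apply: h2.
  move=> ? ? ?; nra.
- move=> k; rewrite !E; apply: lerD; last exact: g3.
  by apply: ler_wpM2l => //; exact: h3.
- move=> k; rewrite !E; apply: lerD; last exact: g4.
  by apply: ler_wpM2l => //; exact: h4.
- by move=> i k hi; rewrite h5 // g5.
- exists (Num.max U U') => k hk; rewrite !E h6 ?g6 //.
    by apply: le_trans hk; rewrite le_max lexx orbT.
  by apply: le_trans hk; rewrite le_max lexx.
Qed.

Lemma FA_zero n L : FA n L (fun _ _ => 0).
Proof.
split; [|split; [|split; [|split; [|split; [|split]]]]].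
- by [].
- by move=> i j _ /=.
- by move=> k /=; rewrite subr0.
- by move=> k /=; rewrite !isum0.
- by move=> k /=; rewrite !isum0.
- by [].
- by exists 0 => k _ /=; rewrite !isum0.
Qed.

Lemma eta_sum n L v L0 k : FA n L v -> vanish_below (eta_row v) L0 ->
  isum (eta_row v) L0 k = isum (v 1%N) L k - isum (v 2%N) L (k + 1).
Proof.
move=> [h0 _] hv.
have vb : forall i, (i <= 2)%N -> vanish_below (v i) L by move=> i hi j hj; apply: h0.
have veta : vanish_below (eta_row v) (L - 1).
  move=> j hj; rewrite /eta_row.
  rewrite (h0 1%N j) //; last by lia.
  rewrite (h0 2%N (j + 1)) //; last by lia.
rewrite (isum_indep _ hv veta) /eta_row isum_sub isum_shift.
rewrite (@isum_lower _ L (L - 1)); [by rewrite subrK | exact: vb | lia].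
Qed.

Lemma FA_Fcone n L v : FA n L v -> Fcone n v.
Proof.
move=> hF; have := hF; move=> [h0 [h1 [h2 [h3 [h4 [h5 [U h6]]]]]]].
have vb : forall i, (i <= 2)%N -> vanish_below (v i) L by move=> i hi j hj; apply: h0.
split; [|split; [|split; [|split; [|split]]]] => //.
- move=> k L1 L2 hv2 hv1.
  rewrite (isum_indep _ hv2 (vb 2%N isT)) (isum_indep _ hv1 (vb 1%N isT)).
  by rewrite subr_ge0.
- by move=> k L0 hL0; rewrite (eta_sum _ hF hL0) subr_ge0.
- move=> L0 U0 hb ha.
  rewrite -(@isum_upper _ L0 U0 (Num.max U U0)) //; last by rewrite le_max lexx orbT.
  rewrite (eta_sum _ hF hb) h6 ?subrr //; by rewrite le_max lexx.
Qed.

Lemma BQ_FA (K : fieldType) n v : (2 <= n)%N -> BQ K n v -> exists L, FA n L v.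
Proof.
move=> hn [s [hs hv]].
have -> : v = (fun i j => \sum_(p <- s) p.1 * bettiQ p.2 i j).
  by apply: functional_extensionality => i /=; apply: functional_extensionality => j /=; exact: hv.
elim: s hs {hv} => [|p s IH] hs.
  exists 0.
  have -> : (fun (i : nat) (j : int) => \sum_(p <- ([::] : seq (rat * gmod K n))) p.1 * bettiQ p.2 i j) =
     (fun (_ : nat) (_ : int) => 0 : rat).
    by apply: functional_extensionality => i; apply: functional_extensionality => j; rewrite big_nil.
  exact: FA_zero.
have [L1 h1] := IH (fun q hq => hs q (or_intror hq)).
have [L2 h2] := module_FA p.2 hn.
exists (Num.min L1 L2).
have -> : (fun (i : nat) (j : int) => \sum_(q <- p :: s) q.1 * bettiQ q.2 i j) =
   (fun i j => p.1 * bettiQ p.2 i j + \sum_(q <- s) q.1 * bettiQ q.2 i j).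
  by apply: functional_extensionality => i /=; apply: functional_extensionality => j /=; rewrite big_cons.
apply: FA_comb; [apply: (FA_lower h2) | apply: (FA_lower h1) | apply: hs; left].
- by rewrite ge_min lexx orbT.
- by rewrite ge_min lexx.
- by [].
Qed.

Definition cdim (s : int) (a : nat) (j : int) : nat :=
  if (s <= j) && (j < s + a%:Z) then 1%N else 0%N.

Definition cX (K : fieldType) (s : int) (a : nat) (j : int)
  : 'M[K]_(cdim s a j, cdim s a (j + 1)) := const_mx 1.

Lemma mx_dim0 (K : fieldType) (p q : nat) (A B : 'M[K]_(p, q)) :
  (p = 0)%N \/ (q = 0)%N -> A = B.
Proof.
move=> h; apply/matrixP => i k; case: h => e.
  by have := leq_trans (ltn_ord i) (eq_leq e).
by have := leq_trans (ltn_ord k) (eq_leq e).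
Qed.

Lemma xpow_cyc (K : fieldType) (s : int) (a : nat) r j :
  xpow (@cX K s a) r j =
  if (s <= j) && (j + r%:Z < s + a%:Z) then const_mx 1 else 0.
Proof.
elim: r => [|r IH] /=.
  case: ifP => h.
    have e : cdim s a j = 1%N by rewrite /cdim addr0 in h *; rewrite h.
    apply/matrixP => i k; rewrite !mxE.
    have hi := leq_trans (ltn_ord i) (eq_leq e); have hk := leq_trans (ltn_ord k) (eq_leq e).
    by rewrite (_ : i == k) //; apply/eqP/val_inj => /=; lia.
  apply: mx_dim0; left; rewrite /cdim; rewrite addr0 in h; by rewrite h.
rewrite IH; case: ifP => h1.
  have e1 : cdim s a (iter r isucc j) = 1%N by rewrite /cdim iter_isucc; case: ifP => //; lia.
  case: ifP => h2.
    apply/matrixP => i k; rewrite !mxE.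
    rewrite (eq_bigr (fun _ => 1)); last by move=> t _; rewrite !mxE mulr1.
    by rewrite sumr_const card_ord e1.
  apply: mx_dim0; right; rewrite /isucc /cdim iter_isucc; case: ifP => //; lia.
rewrite mul0mx; case: ifP => // h2.
by move: h1; rewrite (_ : j + r%:Z < s + a%:Z) ?andbT; [move=> h3; move: h2; rewrite h3 | lia].
Qed.

Lemma cyc_fin (s : int) (a : nat) :
  exists lo hi : int, forall j : int, (j < lo) || (hi < j) -> cdim s a j = 0%N.
Proof.
exists s, (s + a%:Z) => j hj; rewrite /cdim; case: ifP => // h; lia.
Qed.

Lemma cyc_nil (K : fieldType) (n : nat) (s : int) (a : nat) :
  (a <= n)%N -> forall j, xpow (@cX K s a) n j = 0.
Proof. by move=> ha j; rewrite xpow_cyc; case: ifP => //; lia. Qed.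

Definition cyc (K : fieldType) (n : nat) (s : int) (a : nat) (ha : (a <= n)%N)
  : gmod K n := @GMod K n (cdim s a) (@cX K s a) (cyc_fin s a) (cyc_nil K s ha).

Lemma rank_const1 (K : fieldType) (p q : nat) :
  p = 1%N -> q = 1%N -> \rank (const_mx 1 : 'M[K]_(p, q)) = 1%N.
Proof.
move=> ep eq; apply/eqP; rewrite eqn_leq; apply/andP; split.
  by apply: leq_trans (rank_leq_row _) (eq_leq ep).
rewrite lt0n mxrank_eq0; apply/eqP => h.
have hp : (0 < p)%N by rewrite ep.
have hq : (0 < q)%N by rewrite eq.
have := congr1 (fun M : 'M[K]_(p, q) => M (Ordinal hp) (Ordinal hq)) h.
by rewrite !mxE => /eqP; rewrite oner_eq0.
Qed.

Lemma rank_cyc (K : fieldType) (n : nat) (s : int) (a : nat) (ha : (a <= n)%N) r x :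
  \rank (xpow (@gx K n (cyc K s ha)) r x) =
  if (s <= x) && (x + r%:Z < s + a%:Z) then 1%N else 0%N.
Proof.
rewrite /= xpow_cyc; case: ifP => h; last by rewrite mxrank0.
by apply: rank_const1; rewrite /cdim ?iter_isucc; case: ifP => //; lia.
Qed.

Lemma shS n i : sh n i.+1 = sh n i + (if odd i then n%:Z - 1 else 1).
Proof.
rewrite /sh /= uphalf_half; case: (odd i) => /=.
  rewrite mulSn; lia.
rewrite add0n; lia.
Qed.

Lemma pwS n i : pw n i.+1 = if odd i then n.-1 else 1%N.
Proof. by rewrite /pw /=; case: (odd i). Qed.

Lemma betti_cyc (K : fieldType) (n : nat) (s : int) (a : nat) (ha : (a <= n)%N) i j :
  (2 <= n)%N -> (1 <= a)%N ->
  betti (cyc K s ha) i j =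
  nat_of_bool (if a == n then (i == 0%N) && (j == s)
     else j == s + sh n i + (if odd i then a%:Z - 1 else 0)).
Proof.
move=> hn ha1; rewrite /betti !rank_cyc shS pwS /= /cdim.
have hp := predn_int (ltnW hn).
case hi0 : (i == 0%N).
  move/eqP: hi0 => ->; rewrite sh0 /= /pw /=.
  by rewrite !addr0; repeat case: ifP; lia.
rewrite /pw; case ho: (odd i); rewrite /= ?hp; repeat case: ifP; lia.
Qed.

Lemma degseq_form n (e : nat -> int) :
  (forall i, e i.+2 - e i = n%:Z) ->
  forall i, e i = e 0%N + sh n i + (if odd i then e 1%N - e 0%N - 1 else 0).
Proof.
move=> he.
have : forall i, e i = e 0%N + sh n i + (if odd i then e 1%N - e 0%N - 1 else 0) /\
   e i.+1 = e 0%N + sh n i.+1 + (if odd i.+1 then e 1%N - e 0%N - 1 else 0).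
  elim=> [|i [IH1 IH2]].
    by rewrite sh0 sh1 /=; split; lia.
  split => //.
  rewrite shSS /= negbK; have := he i; rewrite IH1; case: (odd i); lia.
by move=> h i; case: (h i).
Qed.

Lemma degseq_module (K : fieldType) n d : (2 <= n)%N -> is_degseq n d ->
  exists M : gmod K n, forall i j, bettiQ M i j = pi_d d i j.
Proof.
move=> hn [[d0 [h0 hi]] | [e [hd [h01 [h1n he]]]]].
  exists (cyc K d0 (leqnn n)) => i j.
  rewrite /bettiQ betti_cyc //; last by lia.
  rewrite eqxx /pi_d; case: i => [|i].
    by rewrite h0 /=; case: (j =P d0) => [->|hj]; rewrite ?eqxx //;
       case: eqP => // [[]] /esym.
  by rewrite hi.
have ha : ((absz (e 1%N - e 0%N)%R) <= n)%N by lia.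
exists (cyc K (e 0%N) ha) => i j.
rewrite /bettiQ betti_cyc //; last by lia.
rewrite ifF; last by lia.
rewrite /pi_d hd (degseq_form he i).
rewrite (_ : (absz (e 1%N - e 0%N)%R)%:Z = e 1%N - e 0%N); last by lia.
set x := _ + _ + _.
by case: (j =P x) => [->|hj]; rewrite ?eqxx //; case: eqP => // [[]] /esym.
Qed.

Lemma D_BQ (K : fieldType) n v : (2 <= n)%N -> Dcone n v -> BQ K n v.
Proof.
move=> hn [s [hs hv]].
suff [s' [hs' e]] : exists s' : seq (rat * gmod K n), (forall p, List.In p s' -> 0 <= p.1) /\
   forall i j, \sum_(p <- s) p.1 * pi_d p.2 i j = \sum_(p <- s') p.1 * bettiQ p.2 i j.
  by exists s'; split => // i j; rewrite hv e.
elim: s hs {hv} => [|p s IH] hs.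
  by exists [::]; split => // i j; rewrite !big_nil.
have [s' [hs' e]] := IH (fun q hq => hs q (or_intror hq)).
have [hp1 hp2] := hs p (or_introl erefl).
have [M hM] := degseq_module K hn hp2.
exists ((p.1, M) :: s'); split.
  by move=> q [<- | hq] //; apply: hs'.
by move=> i j; rewrite !big_cons e hM.
Qed.

Definition window (a b : int) (v : nat -> int -> rat) : Prop :=
  forall i j, (i <= 2)%N -> (j < a) || (b < j) -> v i j = 0.

Definition free_seq (d0 : int) : nat -> option int :=
  fun i => if i is 0%N then Some d0 else None.

Lemma free_degseq n d0 : is_degseq n (free_seq d0).
Proof. by left; exists d0; split => // -[|i]. Qed.

Lemma row0_D n (f : int -> rat) a W : (forall j, 0 <= f j) ->
  exists s : seq (rat * (nat -> option int)),
    (forall p, List.In p s -> 0 <= p.1 /\ is_degseq n p.2) /\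
    forall i j, \sum_(p <- s) p.1 * pi_d p.2 i j =
      if (i == 0%N) && (a <= j) && (j < a + W%:Z) then f j else 0.
Proof.
move=> hf; elim: W => [|W [s [hs e]]].
  exists [::]; split => // i j; rewrite big_nil.
  by case: ifP => //; lia.
exists ((f (a + W%:Z), free_seq (a + W%:Z)) :: s); split.
  by move=> p [<- | hp]; [split; [apply: hf | apply: free_degseq] | apply: hs].
move=> i j; rewrite big_cons e /= /pi_d /free_seq.
case: i => [|i] /=; last by rewrite mulr0 add0r.
have [<-|hj] := eqVneq (a + W%:Z) j.
  rewrite eqxx mulr1; case: ifP => h1; case: ifP => h2; try lia.
  by rewrite addr0.
rewrite (_ : (Some (a + W%:Z) == Some j) = false); last first.
  by apply/negbTE; apply: contra hj => /eqP [->].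
rewrite mulr0 add0r; case: ifP => h1; case: ifP => h2 //; move/eqP: hj; lia.
Qed.

Lemma caseA n a b v : FA n a v -> window a b v -> (forall j, v 1%N j = 0) -> Dcone n v.
Proof.
move=> hF; have := hF; move=> [h0 [h1 [h2 [h3 [h4 [h5 _]]]]]] hw v1z.
have v2z : forall j, v 2%N j = 0.
  move=> j; case: (ltP j a) => hj; first by apply: h0.
  apply/eqP; rewrite eq_le h1 // andbT.
  apply: (le_trans (@isum_point (v 2%N) a j j (fun j => h1 2%N j isT) hj (lexx _))).
  have := h4 (j - 1); rewrite subrK => h; apply: (le_trans h).
  by rewrite isum_zero.
have vz : forall k j, v k.+1 j = 0 /\ v k.+2 j = 0.
  elim=> [|k IH] j; first by split.
  split; first by case: (IH j).
  have := h5 k.+1 (j - n%:Z) isT; rewrite subrK => <-.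
  by case: (IH (j - n%:Z)).
have [s [hs e]] := @row0_D n (v 0%N) a (absz (b - a)%R).+1 (fun j => h1 0%N j isT).
exists s; split => // i j; rewrite e.
case: i => [|i] /=; last by case: (vz i j).
case: ifP => // hj; apply: hw => //; lia.
Qed.

Lemma nz_dec (g : int -> rat) a b : (forall j, (j < a) || (b < j) -> g j = 0) ->
  (exists j, g j != 0) \/ (forall j, g j = 0).
Proof.
move=> hw.
case: (boolP [exists t : 'I_(absz (b - a)%R).+1, g (a + t%:Z) != 0]).
  by move=> /existsP [t ht]; left; exists (a + t%:Z).
move=> /existsPn H; right => j.
case: (boolP ((j < a) || (b < j))) => hj; first by apply: hw.
have ht : (absz (j - a)%R < (absz (b - a)%R).+1)%N by move: hj; rewrite negb_or -!leNgt; lia.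
have := H (Ordinal ht); rewrite negbK /= (_ : a + (absz (j - a)%R)%:Z = j) => [/eqP //|].
move: hj; rewrite negb_or -!leNgt; lia.
Qed.

Lemma first_nz (g : int -> rat) a b : (forall j, (j < a) || (b < j) -> g j = 0) ->
  (exists j, g j != 0) ->
  exists d, [/\ a <= d, d <= b, g d != 0 & forall j, j < d -> g j = 0].
Proof.
move=> hw [j hj].
have hP : exists t : nat, g (a + t%:Z) != 0.
  exists (absz (j - a)%R).
  case: (boolP ((j < a) || (b < j))) => hj2; first by rewrite hw in hj.
  by rewrite (_ : a + (absz (j - a)%R)%:Z = j) //; move: hj2; rewrite negb_or -!leNgt; lia.
case: (ex_minnP hP) => t ht hmin.
exists (a + t%:Z); split => //.
- lia.
- case: (leP (a + t%:Z) b) => // hb; by rewrite hw ?eqxx in ht; [|rewrite hb orbT].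
- move=> k hk; case: (ltP k a) => hka; first by apply: hw; rewrite hka.
  apply/eqP; apply/negPn/negP => hk2.
  have := hmin (absz (k - a)%R); rewrite (_ : a + (absz (k - a)%R)%:Z = k); last by lia.
  by move=> /(_ hk2); lia.
Qed.

Definition cnt (a b : int) (v : nat -> int -> rat) : nat :=
  addn #|[set t : 'I_(absz (b - a)%R).+1 | v 1%N (a + t%:Z) != 0]|
   #|[set t : 'I_(absz (b - a)%R).+1 | v 2%N (a + t%:Z) != 0]|.

Definition eseq (n : nat) (d1 e0 : int) (i : nat) : int :=
  (if odd i then d1 else e0 - n%:Z) + (i./2 * n)%N%:Z.

Lemma eseq0 n d1 e0 : eseq n d1 e0 0 = e0 - n%:Z.
Proof. by rewrite /eseq /= mul0n addr0. Qed.
Lemma eseq1 n d1 e0 : eseq n d1 e0 1 = d1.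
Proof. by rewrite /eseq /= mul0n addr0. Qed.
Lemma eseq2 n d1 e0 : eseq n d1 e0 2 = e0.
Proof. by rewrite /eseq /= mul1n subrK. Qed.
Lemma eseqSS n d1 e0 i : eseq n d1 e0 i.+2 = eseq n d1 e0 i + n%:Z.
Proof. by rewrite /eseq /= negbK mulSn PoszD addrA [_ + n%:Z]addrC addrA; lia. Qed.

Lemma isum_minus (v : int -> rat) (c : rat) (d a k : int) :
  isum (fun j => v j - c * (if Some d == Some j then 1 else 0)) a k =
  isum v a k - (if (a <= d) && (d <= k) then c else 0).
Proof.
rewrite isum_sub -isum_delta; congr (_ - _); apply: isum_ext => j _ _.
by case: (eqVneq j d) => [->|h]; rewrite ?eqxx ?mulr1 //;
   rewrite (_ : (Some d == Some j) = false) ?mulr0 //; apply/negbTE;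
   apply: contra h => /eqP [->].
Qed.

Lemma ord_win (a b x : int) : a <= x -> x <= b ->
  (absz (x - a)%R < (absz (b - a)%R).+1)%N /\ a + (absz (x - a)%R)%:Z = x.
Proof. by move=> h1 h2; split; lia. Qed.

Lemma caseB n a b v : (2 <= n)%N -> FA n a v -> window a b v -> (exists j, v 1%N j != 0) ->
  exists (c : rat) (d : nat -> option int) (v' : nat -> int -> rat),
    0 <= c /\ is_degseq n d /\ FA n a v' /\ window a b v' /\
        (cnt a b v' < cnt a b v)%N /\ forall i j, v i j = c * pi_d d i j + v' i j.
Proof.
move=> hn hF; have := hF; move=> [h0 [h1 [h2 [h3 [h4 [h5 [U h6]]]]]]] hw hex1.
have hw1 : forall j, (j < a) || (b < j) -> v 1%N j = 0 by move=> j; apply: hw.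
have hw2 : forall j, (j < a) || (b < j) -> v 2%N j = 0 by move=> j; apply: hw.
have [d1 [ha1 hb1 hv1 hz1]] := first_nz hw1 hex1.
have hv1p : 0 < v 1%N d1 by rewrite lt_def hv1 h1.
have hex2 : exists j, v 2%N j != 0.
  case: (nz_dec hw2) => // hz2; exfalso.
  have := h3 (d1 + n%:Z - 1); rewrite (_ : d1 + n%:Z - 1 - n%:Z + 1 = d1); last by lia.
  rewrite (@isum_zero _ _ (d1 + n%:Z - 1)) // => h.
  have := isum_point (fun j => h1 1%N j isT) ha1 (lexx d1); lra.
have [e0 [ha2 hb2 hv2 hz2]] := first_nz hw2 hex2.
have hv2p : 0 < v 2%N e0 by rewrite lt_def hv2 h1.
have F4 : e0 <= d1 + n%:Z - 1.
  case: (leP e0 (d1 + n%:Z - 1)) => // hlt; exfalso.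
  have := h3 (d1 + n%:Z - 1); rewrite (_ : d1 + n%:Z - 1 - n%:Z + 1 = d1); last by lia.
  rewrite (@isum_zero _ _ (d1 + n%:Z - 1)); last by move=> j hj; apply: hz2; lia.
  have := isum_point (fun j => h1 1%N j isT) ha1 (lexx d1); lra.
have F5 : d1 <= e0 - 1.
  case: (leP d1 (e0 - 1)) => // hlt; exfalso.
  have := h4 (e0 - 1); rewrite subrK.
  rewrite (@isum_zero _ _ (e0 - 1)); last by move=> j hj; apply: hz1; lia.
  have := isum_point (fun j => h1 2%N j isT) ha2 (lexx e0); lra.
set c := Num.min (v 1%N d1) (v 2%N e0).
have hc1 : c <= v 1%N d1 by rewrite ge_min lexx.
have hc2 : c <= v 2%N e0 by rewrite ge_min lexx orbT.
have hcp : 0 < c by rewrite lt_min hv1p hv2p.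
have hv0 : c <= v 0%N (e0 - n%:Z).
  by apply: (le_trans hc2); have := h2 (e0 - n%:Z); rewrite subrK subr_ge0.
have hw0 : a <= e0 - n%:Z <= b.
  case: (boolP ((e0 - n%:Z < a) || (b < e0 - n%:Z))) => hh.
    by exfalso; move: hv0; rewrite hw //; lra.
  by move: hh; rewrite negb_or -!leNgt.
set e := eseq n d1 e0.
set dd := fun i => Some (e i).
set v' := fun i j => v i j - c * pi_d dd i j.
have hpi : forall i j, pi_d dd i j = if Some (e i) == Some j then 1 else 0 by [].
have hdeg : is_degseq n dd.
  right; exists e; split => //; rewrite /e eseq0 eseq1; split; [lia | split; [lia|]].
  by move=> i; rewrite eseqSS; lia.
have E1 : forall k, isum (v' 1%N) a k = isum (v 1%N) a k - (if d1 <= k then c else 0).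
  move=> k; rewrite /v' /pi_d /dd /e eseq1 (isum_minus (v 1%N) c d1 a k).
  by rewrite ha1.
have E2 : forall k, isum (v' 2%N) a k = isum (v 2%N) a k - (if e0 <= k then c else 0).
  move=> k; rewrite /v' /pi_d /dd /e eseq2 (isum_minus (v 2%N) c e0 a k).
  by rewrite ha2.
have hea : forall i, (i <= 2)%N -> a <= e i <= b.
  case=> [|[|[|]]] // _; rewrite /e ?eseq0 ?eseq1 ?eseq2 //; by apply/andP.
have sne : forall x y : int, x != y -> (Some x == Some y) = false.
  by move=> x y hxy; apply/negbTE; apply: contra hxy => /eqP [->].
have hce : forall i, (i <= 2)%N -> c <= v i (e i).
  case=> [|[|[|]]] // _; rewrite /e ?eseq0 ?eseq1 ?eseq2 //.
exists c, dd, v'; split; [exact: ltW | split => //; split; [|split; [|split]]].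
- split; [|split; [|split; [|split; [|split; [|split]]]]].
  + move=> i j hi hj; rewrite /v' h0 // hpi sne ?mulr0 ?subr0 //.
    by have := hea i hi; apply: contraTneq => ->; lia.
  + move=> i j hi; rewrite /v' hpi.
    case: (eqVneq (e i) j) => [<-|hne]; first by rewrite eqxx mulr1 subr_ge0; apply: hce.
    by rewrite sne // mulr0 subr0; apply: h1.
  + move=> k; rewrite /v' !hpi /e eseq0 eseq2.
    have := h2 k.
    case: (eqVneq (e0 - n%:Z) k) => [<-|hne]; first by rewrite subrK !eqxx; lra.
    rewrite !sne //; first by rewrite !mulr0 !subr0.
    by apply: contra hne => /eqP ->; rewrite addrK.
  + move=> k; rewrite E1 E2; have := h3 k.
    case: ifP => hA; case: ifP => hB; try lra; try (exfalso; lia).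
    rewrite (@isum_zero _ _ (k - n%:Z + 1)); last by move=> j hj; apply: hz1; lia.
    have := isum_point (fun j => h1 2%N j isT) ha2 hB; lra.
  + move=> k; rewrite E1 E2; have := h4 k.
    case: ifP => hA; case: ifP => hB; try lra; try (exfalso; lia).
    rewrite (@isum_zero _ _ (k + 1)); last by move=> j hj; apply: hz2; lia.
    have := isum_point (fun j => h1 1%N j isT) ha1 hB; lra.
  + move=> i k hi; rewrite /v' h5 // !hpi /e eseqSS.
    case: (eqVneq (eseq n d1 e0 i) k) => [->|hne]; first by rewrite !eqxx.
    rewrite !sne //; apply: contra hne => /eqP h; apply/eqP; lia.
  + exists (Num.max U b) => k hk.
    have hUk : U <= k by apply: le_trans hk; rewrite le_max lexx.
    have hbk : b <= k by apply: le_trans hk; rewrite le_max lexx orbT.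
    rewrite E1 E2 ifT; last by lia.
    rewrite ifT; last by lia.
    by rewrite h6.
- move=> i j hi hj; rewrite /v' hw // hpi sne ?mulr0 ?subr0 //.
  by have := hea i hi; apply: contraTneq => ->; lia.
- rewrite /cnt.
  have e1 : e 1%N = d1 by rewrite /e eseq1.
  have e2 : e 2%N = e0 by rewrite /e eseq2.
  have sub1 : [set t : 'I_(absz (b - a)%R).+1 | v' 1%N (a + t%:Z) != 0] \subset
              [set t : 'I_(absz (b - a)%R).+1 | v 1%N (a + t%:Z) != 0].
    apply/subsetP => t; rewrite !inE /v' hpi; apply: contra => /eqP hz.
    case: (eqVneq (e 1%N) (a + t%:Z)) => [he|hne].
      by move: hv1; rewrite -e1 he hz eqxx.
    by rewrite hz sne // mulr0 subr0.
  have sub2 : [set t : 'I_(absz (b - a)%R).+1 | v' 2%N (a + t%:Z) != 0] \subset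
              [set t : 'I_(absz (b - a)%R).+1 | v 2%N (a + t%:Z) != 0].
    apply/subsetP => t; rewrite !inE /v' hpi; apply: contra => /eqP hz.
    case: (eqVneq (e 2%N) (a + t%:Z)) => [he|hne].
      by move: hv2; rewrite -e2 he hz eqxx.
    by rewrite hz sne // mulr0 subr0.
  have hWd : forall x, a <= x -> x <= b -> (absz (x - a)%R < (absz (b - a)%R).+1)%N.
    by move=> x hx1 hx2; case: (ord_win hx1 hx2).
  case: (leP (v 1%N d1) (v 2%N e0)) => hle.
    have ec : c = v 1%N d1 by rewrite /c min_l.
    have pr : [set t : 'I_(absz (b - a)%R).+1 | v' 1%N (a + t%:Z) != 0] \proper
              [set t : 'I_(absz (b - a)%R).+1 | v 1%N (a + t%:Z) != 0].
      have [_ hd] := ord_win ha1 hb1.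
      apply/properP; split => //; exists (Ordinal (hWd d1 ha1 hb1)); rewrite !inE /= hd //.
      by rewrite negbK /v' hpi e1 eqxx mulr1 ec subrr.
    by rewrite -addSn; apply: leq_add; [apply: proper_card | apply: subset_leq_card].
  have ec : c = v 2%N e0 by rewrite /c min_r // ltW.
  have pr : [set t : 'I_(absz (b - a)%R).+1 | v' 2%N (a + t%:Z) != 0] \proper
            [set t : 'I_(absz (b - a)%R).+1 | v 2%N (a + t%:Z) != 0].
    have [_ hd] := ord_win ha2 hb2.
    apply/properP; split => //; exists (Ordinal (hWd e0 ha2 hb2)); rewrite !inE /= hd //.
    by rewrite negbK /v' hpi e2 eqxx mulr1 ec subrr.
  by rewrite -addnS; apply: leq_add; [apply: subset_leq_card | apply: proper_card].
- by move=> i j; rewrite /v'; ring.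
Qed.

Lemma greedy n a b : (2 <= n)%N -> forall N v, FA n a v -> window a b v ->
  (cnt a b v < N)%N -> Dcone n v.
Proof.
move=> hn; elim=> [|N IH] v hF hw hc //.
have hw1 : forall j, (j < a) || (b < j) -> v 1%N j = 0 by move=> j; apply: hw.
case: (nz_dec hw1) => [hex|hz]; last exact: (caseA hF hw hz).
have [c [d [v' [hc0 [hd [hF' [hw' [hlt he]]]]]]]] := caseB hn hF hw hex.
have [s [hs hs']] := IH v' hF' hw' (leq_trans hlt hc).
exists ((c, d) :: s); split.
  by move=> p [<- | hp] //; apply: hs.
by move=> i j; rewrite he big_cons hs'.
Qed.

Lemma bound3 (v : nat -> int -> rat) : inV v ->
  exists a b : int, window a b v.
Proof.
move=> hv.
have [a0 [b0 h0]] := hv 0%N; have [a1 [b1 h1]] := hv 1%N; have [a2 [b2 h2]] := hv 2%N.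
exists (Num.min a0 (Num.min a1 a2)), (Num.max b0 (Num.max b1 b2)).
move=> i j; case: i => [|[|[|i]]] // _ hj.
- apply: h0; move: hj; rewrite !lt_min !gt_max; case/orP => /andP [h /andP [? ?]];
  by rewrite ?h ?orbT.
- apply: h1; move: hj; rewrite !lt_min !gt_max; case/orP => /andP [? /andP [h ?]];
  by rewrite ?h ?orbT.
- apply: h2; move: hj; rewrite !lt_min !gt_max; case/orP => /andP [? /andP [? h]];
  by rewrite ?h ?orbT.
Qed.

Lemma Fcone_FA n v : (2 <= n)%N -> inV v -> Fcone n v ->
  exists a b, FA n a v /\ window a b v.
Proof.
move=> hn hv [f1 [f2 [f3 [f4 [f5 f6]]]]].
have [a [b hw]] := bound3 hv.
have h0 : forall i j, (i <= 2)%N -> j < a -> v i j = 0.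
  by move=> i j hi hj; apply: hw => //; rewrite hj.
have vb : forall i, (i <= 2)%N -> vanish_below (v i) a by move=> i hi j hj; apply: h0.
have veta : vanish_below (eta_row v) (a - 1).
  move=> j hj; rewrite /eta_row (h0 1%N j) //; last by lia.
  by rewrite (h0 2%N (j + 1)) //; lia.
have Eeta : forall k, isum (eta_row v) (a - 1) k = isum (v 1%N) a k - isum (v 2%N) a (k + 1).
  move=> k; rewrite /eta_row isum_sub isum_shift subrK.
  by rewrite (@isum_lower _ a (a - 1)); [| exact: vb | lia].
exists a, b; split => //.
split; [|split; [|split; [|split; [|split; [|split]]]]] => //.
- move=> k; have := f3 k a a (vb 2%N isT) (vb 1%N isT); by rewrite subr_ge0.
- move=> k; have := f4 k (a - 1) veta; by rewrite Eeta subr_ge0.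
- exists b => k hk; apply/eqP; rewrite -subr_eq0 -Eeta; apply/eqP.
  apply: f6 => // j hj; rewrite /eta_row !hw //; apply/orP; right; lia.
Qed.

Unset Implicit Arguments.

Theorem theorem3p4 (K : fieldType) (n : nat) (hn : (2 <= n)%N)
    (v : nat -> int -> rat) (hv : inV v) :
  (BQ K n v <-> Dcone n v) /\ (Dcone n v <-> Fcone n v).
Proof.
have BF : BQ K n v -> Fcone n v.
  by move=> h; have [L hL] := BQ_FA hn h; exact: FA_Fcone hL.
have FD : Fcone n v -> Dcone n v.
  move=> hF; have [a [b [hA hw]]] := Fcone_FA hn hv hF.
  exact: (greedy hn hA hw (ltnSn _)).
have DB : Dcone n v -> BQ K n v := D_BQ K hn.
by split; split; auto.
Qed.
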